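(* Let $G\subseteq\mathrm{GL}_n(\mathbb{R})$ be a group of order two with fundamental invariants $\pi_1,\dots,\pi_m$ and Hilbert map $\Pi=(\pi_1,\dots,\pi_m)$. For $i=1,\dots,n$ let $f_i=X_i-\mathcal{R}_G(X_i)$, and let $f=\sum_{i=1}^n f_i^2$. Then $f\in\mathbb{R}[\underline{X}]^G$ and \[\Pi(\mathbb{R}^n)=\{z\in V_{\mathbb{R}}(I_\Pi)\mid \phi_z(f)\ge0\}.\]
   Context: $\mathbb{R}[\underline{X}]=\mathbb{R}[X_1,\dots,X_n]$, $G$ acts by $h^\sigma(x)=h(\sigma^{-1}x)$, $\mathbb{R}[\underline{X}]^G=\mathbb{R}[\pi_1,\dots,\pi_m]$, and $\mathcal{R}_G(h)=\frac{1}{|G|}\sum_{\sigma\in G}h^\sigma$. $I_\Pi$ is the ideal of relations among $\pi_1,\dots,\pi_m$, $V_{\mathbb{R}}(I_\Pi)\subseteq\mathbb{R}^m$ its real zero set, and for $z\in V_{\mathbb{R}}(I_\Pi)$, $\phi_z:\mathbb{R}[\underline{X}]^G\to\mathbb{R}$ is $g(\pi_1,\dots,\pi_m)\mapsto g(z)$. *)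

(* Defs.v *)
From HB Require Import structures.
From mathcomp Require Import all_boot all_order all_algebra.
From mathcomp Require Import reals.
From mathcomp Require Import mpoly.
From Stdlib Require Import ClassicalEpsilon.

Set Implicit Arguments.
Unset Strict Implicit.
Unset Printing Implicit Defensive.

Import Order.TTheory GRing.Theory Num.Theory.
Local Open Scope ring_scope.

Section Defs.
Variables (R : realType) (n m : nat).

Definition is_finite_subgroup_GL (G : seq 'M[R]_n) : Prop :=
  [/\ uniq G, (1%:M : 'M[R]_n) \in G,
      (forall a, a \in G -> a \in unitmx /\ invmx a \in G) &
      (forall a b, a \in G -> b \in G -> a *m b \in G)].

(* Action h^sigma (x) = h (sigma^{-1} x):  substitute X_i by
   sum_j (sigma^{-1})_{ij} X_j. *)
Definition mact (s : 'M[R]_n) (h : {mpoly R[n]}) : {mpoly R[n]} :=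
  h \mPo [tuple (\sum_(j < n) (invmx s) i j *: 'X_j) | i < n].

Definition is_invariant (G : seq 'M[R]_n) (h : {mpoly R[n]}) : Prop :=
  forall s, s \in G -> mact s h = h.

Definition reynolds (G : seq 'M[R]_n) (h : {mpoly R[n]}) : {mpoly R[n]} :=
  (size G)%:R^-1 *: \sum_(s <- G) mact s h.

Definition fundamental_invariants (G : seq 'M[R]_n) (pi : 'I_m -> {mpoly R[n]})
  : Prop :=
  (forall i, is_invariant G (pi i)) /\
  (forall h, is_invariant G h <-> exists g : {mpoly R[m]}, h = g \mPo [tuple pi i | i < m]).

Definition hilbert_map (pi : 'I_m -> {mpoly R[n]}) (x : 'I_n -> R) : 'I_m -> R :=
  fun i => (pi i).@[x].

Definition relation_ideal (pi : 'I_m -> {mpoly R[n]}) (g : {mpoly R[m]}) : Prop :=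
  g \mPo [tuple pi i | i < m] = 0.

Definition real_variety (pi : 'I_m -> {mpoly R[n]}) (z : 'I_m -> R) : Prop :=
  forall g, relation_ideal pi g -> g.@[z] = 0.

(* phi_z : g(pi_1..pi_m) |-> g(z), with g chosen (well defined for z in V_R(I_Pi)). *)
Definition phi (pi : 'I_m -> {mpoly R[n]}) (z : 'I_m -> R) (h : {mpoly R[n]}) : R :=
  (epsilon (inhabits (0 : {mpoly R[m]}))
           (fun g : {mpoly R[m]} => g \mPo [tuple pi i | i < m] = h)).@[z].

End Defs.

(* Main.v *)
Require Import Defs.
From HB Require Import structures.
From mathcomp Require Import all_boot all_order all_algebra.
From mathcomp Require Import reals.
From mathcomp Require Import mpoly.
From mathcomp Require Import ring lra.
From Stdlib Require Import ClassicalEpsilon FunctionalExtensionality.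

Set Implicit Arguments.
Unset Strict Implicit.
Unset Printing Implicit Defensive.
Import Order.TTheory GRing.Theory Num.Theory.
Local Open Scope ring_scope.

Section Sg.
Variables (R : realType) (n : nat) (s : 'M[R]_n).
Hypothesis ss : s *m s = 1%:M.

Definition Y i : {mpoly R[n]} := \sum_(j < n) s i j *: 'X_j.
Definition T := [tuple Y i | i < n].
Definition sg (p : {mpoly R[n]}) := p \mPo T.
Definition L i : {mpoly R[n]} := 2%:R^-1 *: ('X_i + Y i).
Definition M i : {mpoly R[n]} := 2%:R^-1 *: ('X_i - Y i).

Lemma sgX i : sg 'X_i = Y i.
Proof. by rewrite /sg comp_mpolyXU -tnth_nth tnth_mktuple. Qed.

Lemma sY i : \sum_(j < n) s i j *: Y j = 'X_i.
Proof.
rewrite /Y.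
under eq_bigr do rewrite scaler_sumr.
rewrite exchange_big /=.
under eq_bigr do (under eq_bigr do rewrite scalerA; rewrite -scaler_suml).
have e k : \sum_(j < n) s i j * s j k = (i == k)%:R.
  by have := congr1 (fun A : 'M_n => A i k) ss; rewrite !mxE.
under eq_bigr do rewrite e.
rewrite (bigD1 i) //= big1 ?addr0 ?eqxx ?scale1r //.
by move=> k /negbTE ki; rewrite eq_sym ki scale0r.
Qed.

Lemma sgY i : sg (Y i) = 'X_i.
Proof.
rewrite {1}/Y /sg raddf_sum /=.
under eq_bigr do rewrite comp_mpolyZ -/(sg _) sgX.
exact: sY.
Qed.

Lemma XLM i : 'X_i = L i + M i.
Proof.
rewrite /L /M -scalerDr addrACA subrr addr0 -mulr2n -scaler_nat scalerA mulVf ?scale1r //.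
by rewrite pnatr_eq0.
Qed.

Lemma sgL i : sg (L i) = L i.
Proof. by rewrite /L /sg comp_mpolyZ comp_mpolyD -!/(sg _) sgX sgY addrC. Qed.

Lemma sgM i : sg (M i) = - M i.
Proof. by rewrite /M /sg comp_mpolyZ comp_mpolyB -!/(sg _) sgX sgY -scalerN opprB. Qed.

Lemma sumL i : \sum_(j < n) s i j *: L j = L i.
Proof.
rewrite /L; under eq_bigr do rewrite scalerA mulrC -scalerA.
rewrite -scaler_sumr; congr (_ *: _).
under eq_bigr do rewrite scalerDr.
by rewrite big_split /= sY addrC.
Qed.

Lemma sumM i : \sum_(j < n) s i j *: M j = - M i.
Proof.
rewrite /M; under eq_bigr do rewrite scalerA mulrC -scalerA scalerBr.
by rewrite -scaler_sumr sumrB sY -scalerN opprB.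
Qed.

Lemma meval_sg (v : 'I_n -> R) p :
  (sg p).@[v] = p.@[fun i => \sum_(j < n) s i j * v j].
Proof.
rewrite /sg comp_mpoly_meval; apply: meval_eq => i.
rewrite tnth_mktuple /Y raddf_sum; apply: eq_bigr => j _.
by rewrite /= mevalZ mevalXU.
Qed.

End Sg.

Section Phi.
Variables (R : realType) (n m : nat) (pi : 'I_m -> {mpoly R[n]}) (z : 'I_m -> R).
Hypothesis hz : real_variety pi z.

Definition PT := [tuple pi i | i < m].
Definition exg (p : {mpoly R[n]}) := exists g : {mpoly R[m]}, g \mPo PT = p.

Lemma phiE g : phi pi z (g \mPo PT) = g.@[z].
Proof.
rewrite /phi.
set g0 := epsilon _ _.
have : g0 \mPo PT = g \mPo PT.
  by apply: (epsilon_spec (inhabits (0 : {mpoly R[m]})) (fun g1 => g1 \mPo _ = _)); exists g.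
move=> e; apply/eqP; rewrite -subr_eq0 -mevalB; apply/eqP; apply: hz.
by rewrite /relation_ideal comp_mpolyB e subrr.
Qed.

Lemma exgD p q : exg p -> exg q -> exg (p + q).
Proof. by move=> [g1 <-] [g2 <-]; exists (g1 + g2); rewrite comp_mpolyD. Qed.
Lemma exgM p q : exg p -> exg q -> exg (p * q).
Proof. by move=> [g1 <-] [g2 <-]; exists (g1 * g2); rewrite rmorphM. Qed.
Lemma exgZ c p : exg p -> exg (c *: p).
Proof. by move=> [g1 <-]; exists (c *: g1); rewrite comp_mpolyZ. Qed.
Lemma exgC c : exg c%:MP.
Proof. by exists c%:MP; rewrite comp_mpolyC. Qed.

Lemma phiD p q : exg p -> exg q -> phi pi z (p + q) = phi pi z p + phi pi z q.
Proof. by move=> [g1 <-] [g2 <-]; rewrite -comp_mpolyD !phiE mevalD. Qed.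
Lemma phiM p q : exg p -> exg q -> phi pi z (p * q) = phi pi z p * phi pi z q.
Proof. by move=> [g1 <-] [g2 <-]; rewrite -rmorphM !phiE mevalM. Qed.
Lemma phiZ c p : exg p -> phi pi z (c *: p) = c * phi pi z p.
Proof. by move=> [g1 <-]; rewrite -comp_mpolyZ !phiE mevalZ. Qed.
Lemma phiC c : phi pi z c%:MP = c.
Proof. by rewrite -(comp_mpolyC c PT) phiE mevalC. Qed.

Lemma exg_sum (I : Type) (r : seq I) (F : I -> {mpoly R[n]}) :
  (forall i, exg (F i)) -> exg (\sum_(i <- r) F i).
Proof.
move=> h; elim: r => [|a r ih]; first by rewrite big_nil -mpolyC0; apply: exgC.
by rewrite big_cons; apply: exgD.
Qed.

Lemma phi_sum (I : Type) (r : seq I) (F : I -> {mpoly R[n]}) :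
  (forall i, exg (F i)) -> phi pi z (\sum_(i <- r) F i) = \sum_(i <- r) phi pi z (F i).
Proof.
move=> h; elim: r => [|a r ih]; first by rewrite !big_nil -mpolyC0 phiC.
by rewrite !big_cons phiD ?ih //; apply: exg_sum.
Qed.

Lemma phiPi i : phi pi z (pi i) = z i.
Proof.
have -> : pi i = 'X_i \mPo PT by rewrite comp_mpolyXU -tnth_nth tnth_mktuple.
by rewrite phiE mevalXU.
Qed.

End Phi.

Lemma rank1 (R : realType) n (s : 'M[R]_n) (c : 'I_n -> 'I_n -> R) :
  (forall i j k l, c i j * c k l = c i k * c j l) ->
  (forall i k, \sum_(j < n) s i j * c j k = - c i k) ->
  0 <= \sum_(i < n) c i i ->
  exists b : 'I_n -> R, (forall i j, b i * b j = c i j) /\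
     (forall i, \sum_(j < n) s i j * b j = - b i).
Proof.
move=> hr hs htr.
have [/existsP [k hk]|hn] := boolP [exists k, 0 < c k k].
  exists (fun i => c i k / Num.sqrt (c k k)); split.
    move=> i j; rewrite mulrACA -expr2 exprVn sqr_sqrtr ?ltW // -hr.
    by rewrite mulfK // gt_eqF.
  move=> i; under eq_bigr do rewrite mulrA.
  by rewrite -mulr_suml hs mulNr.
have hle k : c k k <= 0.
  by rewrite leNgt; apply/negP => h; move/negP: hn; apply; apply/existsP; exists k.
have h0 : \sum_(i < n) - c i i = 0.
  apply/eqP; rewrite eq_le; apply/andP; split.
    by rewrite sumrN oppr_le0.
  by apply: sumr_ge0 => i _; rewrite oppr_ge0.
have hd k : c k k = 0.
  apply/eqP; rewrite -oppr_eq0; apply/eqP.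
  by apply: (psumr_eq0P _ h0) => // i _; rewrite oppr_ge0.
have hz i j : c i j = 0.
  by apply/eqP; have := expf_eq0 (c i j) 2; rewrite expr2 hr !hd mul0r eqxx /= => <-.
exists (fun _ => 0); split => [i j|i]; first by rewrite mul0r hz.
by rewrite big1 ?oppr0 // => j _; rewrite mulr0.
Qed.

Section Rev.
Variables (R : realType) (n m : nat) (pi : 'I_m -> {mpoly R[n]}) (z : 'I_m -> R).
Variable (s : 'M[R]_n).
Hypothesis ss : s *m s = 1%:M.
Hypothesis hz : real_variety pi z.
Hypothesis fund : forall h, sg s h = h -> exg pi h.
Hypothesis hf : 0 <= phi pi z (\sum_(i < n) M s i ^+ 2).

Local Notation ph := (phi pi z).
Local Notation L := (L s).
Local Notation M := (M s).

Definition aa i := ph (L i).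
Definition cc i j := ph (M i * M j).

Lemma sgMM i j : sg s (M i * M j) = M i * M j.
Proof.
have h1 := sgM ss i; have h2 := sgM ss j; rewrite /sg in h1 h2.
by rewrite /sg rmorphM /= h1 h2 mulrNN. Qed.

Lemma exgL i : exg pi (L i). Proof. exact: fund (sgL ss i). Qed.
Lemma exgMM i j : exg pi (M i * M j). Proof. exact: fund (sgMM i j). Qed.

Lemma aa_fix i : \sum_(j < n) s i j * aa j = aa i.
Proof.
rewrite /aa -(sumL ss i) phi_sum //; last by move=> j; apply: exgZ; apply: exgL.
by apply: eq_bigr => j _; rewrite [RHS]phiZ //; apply: exgL.
Qed.

Lemma cc_anti i k : \sum_(j < n) s i j * cc j k = - cc i k.
Proof.
have e : \sum_(j < n) s i j *: (M j * M k) = (-1) *: (M i * M k).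
  by rewrite scaleN1r -mulNr -(sumM ss i) mulr_suml; apply: eq_bigr => j _; rewrite scalerAl.
have := congr1 ph e.
rewrite [RHS]phiZ //; last exact: exgMM.
rewrite phi_sum //; last by move=> j; apply: exgZ; apply: exgMM.
rewrite mulN1r => <-; apply: eq_bigr => j _; rewrite [RHS]phiZ //; apply: exgMM.
Qed.

Lemma cc_rank i j k l : cc i j * cc k l = cc i k * cc j l.
Proof.
rewrite /cc -!phiM //; try exact: exgMM.
congr ph; ring.
Qed.

Lemma cc_tr : 0 <= \sum_(i < n) cc i i.
Proof.
have h i : exg pi (M i ^+ 2) by rewrite expr2; apply: exgMM.
by move: hf; rewrite phi_sum.
Qed.


Variable (b : 'I_n -> R).
Hypothesis hb1 : forall i j, b i * b j = cc i j.
Hypothesis hb2 : forall i, \sum_(j < n) s i j * b j = - b i.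
Hypothesis pinv : forall i, sg s (pi i) = pi i.

Definition xx i := aa i + b i.

Lemma Yx i : (Y s i).@[xx] = aa i - b i.
Proof.
rewrite /Y raddf_sum /=.
under eq_bigr do rewrite mevalZ mevalXU /xx mulrDr.
by rewrite big_split /= aa_fix hb2.
Qed.

Lemma Lx i : (L i).@[xx] = aa i.
Proof. rewrite /L mevalZ mevalD mevalXU Yx /xx. lra. Qed.
Lemma Mx i : (M i).@[xx] = b i.
Proof. rewrite /M mevalZ mevalB mevalXU Yx /xx. lra. Qed.

Definition SS p := sg s p = p /\ ph p = p.@[xx].

Lemma SC c : SS c%:MP.
Proof. by split; rewrite ?phiC ?mevalC // /sg comp_mpolyC. Qed.
Lemma S0 : SS 0.
Proof. by rewrite -mpolyC0; apply: SC. Qed.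
Lemma S1 : SS 1.
Proof. by rewrite -mpolyC1; apply: SC. Qed.
Lemma SD p q : SS p -> SS q -> SS (p + q).
Proof.
move=> [h1 h2] [h3 h4]; split; first by rewrite /sg comp_mpolyD -!/(sg _ _) h1 h3.
by rewrite phiD ?h2 ?h4 ?mevalD //; apply: fund.
Qed.
Lemma SM p q : SS p -> SS q -> SS (p * q).
Proof.
move=> [h1 h2] [h3 h4]; split.
  by move: h1 h3; rewrite /sg rmorphM /= => -> ->.
by rewrite phiM ?h2 ?h4 ?mevalM //; apply: fund.
Qed.
Lemma SL i : SS (L i).
Proof. by split; [apply: sgL | rewrite Lx]. Qed.
Lemma SMM i j : SS (M i * M j).
Proof. by split; [apply: sgMM | rewrite mevalM !Mx hb1]. Qed.
Lemma Ssum (F : 'I_n -> {mpoly R[n]}) : (forall i, SS (F i)) -> SS (\sum_(i < n) F i).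
Proof. by move=> h; apply: (big_ind SS S0 SD) => i _; apply: h. Qed.

Definition OO p := exists g : 'I_n -> {mpoly R[n]},
  (forall i, SS (g i)) /\ p = \sum_(i < n) M i * g i.

Lemma O0 : OO 0.
Proof. by exists (fun _ => 0); split => [i|]; [apply: S0 | rewrite big1 // => i _; rewrite mulr0]. Qed.
Lemma OD p q : OO p -> OO q -> OO (p + q).
Proof.
move=> [g [hg ->]] [g' [hg' ->]]; exists (fun i => g i + g' i); split => [i|].
  by apply: SD.
by rewrite -big_split; apply: eq_bigr => i _; rewrite mulrDr.
Qed.
Lemma OSM e p : SS e -> OO p -> OO (e * p).
Proof.
move=> he [g [hg ->]]; exists (fun i => e * g i); split => [i|].
  by apply: SM.
by rewrite mulr_sumr; apply: eq_bigr => i _; rewrite mulrCA.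
Qed.
Lemma OOM p q : OO p -> OO q -> SS (p * q).
Proof.
move=> [g [hg ->]] [g' [hg' ->]].
rewrite mulr_suml; apply: Ssum => i; rewrite mulr_sumr; apply: Ssum => j.
have -> : M i * g i * (M j * g' j) = (M i * M j) * (g i * g' j) by ring.
by apply: SM; [apply: SMM | apply: SM].
Qed.
Lemma OM i : OO (M i).
Proof.
exists (fun j => if j == i then 1 else 0); split => [j|].
  by case: (j == i); [apply: S1 | apply: S0].
rewrite (bigD1 i) //= eqxx mulr1 big1 ?addr0 // => j /negbTE ->.
by rewrite mulr0.
Qed.
Lemma sgO p : OO p -> sg s p = - p.
Proof.
move=> [g [hg ->]]; rewrite /sg raddf_sum /= -sumrN; apply: eq_bigr => i _.
have h1 := sgM ss i; have [h2 _] := hg i; rewrite /sg in h1 h2.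
by rewrite rmorphM /= h1 h2 mulNr.
Qed.

Definition Dec p := exists e o, SS e /\ OO o /\ p = e + o.

Lemma DecD p q : Dec p -> Dec q -> Dec (p + q).
Proof.
move=> [e [o [he [ho ->]]]] [e' [o' [he' [ho' ->]]]].
exists (e + e'), (o + o'); split; [exact: SD | split; [exact: OD|]].
by rewrite addrACA.
Qed.
Lemma DecM p q : Dec p -> Dec q -> Dec (p * q).
Proof.
move=> [e [o [he [ho ->]]]] [e' [o' [he' [ho' ->]]]].
exists (e * e' + o * o'), (e * o' + e' * o); split.
  by apply: SD; [apply: SM | apply: OOM].
split; first by apply: OD; apply: OSM.
ring.
Qed.
Lemma DecC c : Dec c%:MP.
Proof. by exists c%:MP, 0; split; [apply: SC | split; [apply: O0 | rewrite addr0]]. Qed.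
Lemma DecX i : Dec 'X_i.
Proof. by exists (L i), (M i); split; [apply: SL | split; [apply: OM | apply: XLM]]. Qed.
Lemma DecAll p : Dec p.
Proof.
elim/mpolyind: p => [|c mm p _ _ hp].
  by rewrite -mpolyC0; apply: DecC.
apply: DecD => //; rewrite -mul_mpolyC; apply: DecM; first exact: DecC.
rewrite mpolyXE_id; apply: (big_ind Dec) => //.
- by rewrite -mpolyC1; apply: DecC.
- exact: DecM.
move=> i _; elim: (mm i) => [|k ih]; first by rewrite expr0 -mpolyC1; apply: DecC.
by rewrite exprS; apply: DecM => //; apply: DecX.
Qed.

Lemma Sinv h : sg s h = h -> SS h.
Proof.
move=> hh; have [e [o [he [ho eh]]]] := DecAll h.
have so := sgO ho.
have : o = 0.
  have [se _] := he.
  move: hh; rewrite eh /sg comp_mpolyD -!/(sg _ _) se so => /addrI.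
  move/eqP; rewrite eq_sym -subr_eq0 opprK -mulr2n -scaler_nat scaler_eq0 pnatr_eq0 /=.
  by move/eqP.
by move=> o0; rewrite eh o0 addr0.
Qed.

Lemma zx i : z i = (pi i).@[xx].
Proof. by have [_ <-] := Sinv (pinv i); rewrite phiPi. Qed.

End Rev.

Lemma getS (R : realType) n (G : seq 'M[R]_n) :
  is_finite_subgroup_GL G -> size G = 2%N ->
  exists s : 'M[R]_n, [/\ s *m s = 1%:M, invmx s = s, s \in G,
    (forall t, t \in G -> t = 1%:M \/ t = s) &
    (forall F : 'M[R]_n -> {mpoly R[n]}, \sum_(t <- G) F t = F 1%:M + F s)].
Proof.
move=> [hu h1 hinv hmul] hsz.
have key : forall s, uniq [:: 1%:M; s] -> s \in G -> (forall t, t \in G -> t = 1%:M \/ t = s) ->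
   s *m s = 1%:M /\ invmx s = s.
  move=> s /= /andP [hs1 _] sG hall.
  have [su _] := hinv s sG.
  have ss : s *m s = 1%:M.
    case: (hall _ (hmul _ _ sG sG)) => // e.
    exfalso; move/negP: hs1; apply; rewrite inE; apply/eqP.
    by rewrite -[s](mulKmx su s) e mulVmx.
  by split => //; rewrite -[s in RHS](mulKmx su s) ss mulmx1.
clear hinv hmul; case: G hu h1 hsz key => [|g1 [|g2 [|g3 G]]] //= hu h1 _ key.
rewrite !inE in h1.
have hall1 : forall t, t \in [:: g1; g2] -> t = g1 \/ t = g2.
  by move=> t; rewrite !inE => /orP [] /eqP ->; [left|right].
case/orP: h1 => /eqP e.
  subst g1; exists g2.
  have hall := hall1; have g2G : g2 \in [:: 1%:M; g2] by rewrite !inE eqxx orbT.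
  have [ss2 is2] := key g2 hu g2G hall.
  by split => // F; rewrite !big_cons big_nil addr0.
subst g2; exists g1.
have hall : forall t, t \in [:: g1; 1%:M] -> t = 1%:M \/ t = g1.
  by move=> t /hall1 [] ->; [right|left].
have hu' : uniq [:: 1%:M; g1] by move: hu => /=; rewrite !inE !andbT eq_sym.
have g1G : g1 \in [:: g1; 1%:M] by rewrite !inE eqxx.
have [ss2 is2] := key g1 hu' g1G hall.
by split => // F; rewrite !big_cons big_nil addr0 addrC.
Qed.

Lemma mact1 (R : realType) n (h : {mpoly R[n]}) : mact 1%:M h = h.
Proof.
rewrite /mact invmx1 -[RHS]comp_mpoly_id; congr comp_mpoly.
apply: eq_from_tnth => i; rewrite !tnth_mktuple.
rewrite (bigD1 i) //= big1 ?addr0 ?mxE ?eqxx ?scale1r // => j /negbTE ji.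
by rewrite mxE eq_sym ji scale0r.
Qed.

Theorem lemma3p10 (R : realType) (n m : nat) (G : seq 'M[R]_n)
    (pi : 'I_m -> {mpoly R[n]}) :
  is_finite_subgroup_GL G -> size G = 2%N ->
  fundamental_invariants G pi ->
  let fi := fun i : 'I_n => 'X_i - reynolds G 'X_i in
  let f := \sum_(i < n) fi i ^+ 2 in
  is_invariant G f /\
  (forall z : 'I_m -> R,
     (exists x : 'I_n -> R, z = hilbert_map pi x) <->
     (real_variety pi z /\ 0 <= phi pi z f)).
Proof.
move=> hG hsz [hpi hfund] fi f.
have [s [ss invs sG hall hsum]] := getS hG hsz.
have mactS h : mact s h = sg s h by rewrite /mact invs.
have invG h : sg s h = h -> is_invariant G h.
  by move=> hh t /hall [] ->; [rewrite mact1 | rewrite mactS].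
have fund h : sg s h = h -> exg pi h.
  by move=> hh; have [g hg] := proj1 (hfund h) (invG h hh); exists g; rewrite hg.
have pinv i : sg s (pi i) = pi i by rewrite -mactS; apply: (hpi i s sG).
have fE : f = \sum_(i < n) M s i ^+ 2.
  rewrite /f /fi; apply: eq_bigr => i _; congr (_ ^+ 2).
  rewrite /reynolds hsum mact1 mactS sgX hsz -/(L s i).
  by rewrite {1}(@XLM _ _ s i) addrAC subrr add0r.
have sgf : sg s f = f.
  rewrite fE /sg raddf_sum /=; apply: eq_bigr => i _.
  have h1 := sgM ss i; rewrite /sg in h1.
  by rewrite rmorphXn /= h1 sqrrN.
split; first exact: invG.
move=> z; split.
  move=> [x ->].
  have rv : real_variety pi (hilbert_map pi x).
    move=> g hg; have := congr1 (meval x) hg; rewrite comp_mpoly_meval meval0 => <-.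
    by apply: meval_eq => i; rewrite tnth_mktuple.
  split => //.
  have [g hg] := fund f sgf.
  rewrite -hg phiE //.
  have -> : g.@[hilbert_map pi x] = (g \mPo PT pi).@[x].
    by rewrite comp_mpoly_meval; apply: meval_eq => i; rewrite tnth_mktuple.
  rewrite hg fE raddf_sum /=; apply: sumr_ge0 => i _.
  by rewrite rmorphXn /= sqr_ge0.
move=> [hz hf]; rewrite fE in hf.
have r1 : forall i j k l, cc pi z s i j * cc pi z s k l = cc pi z s i k * cc pi z s j l.
  by move=> i j k l; apply: cc_rank.
have r2 : forall i k, \sum_(j < n) s i j * cc pi z s j k = - cc pi z s i k.
  by move=> i k; apply: cc_anti.
have r3 : 0 <= \sum_(i < n) cc pi z s i i by exact: cc_tr hf.
have [b [hb1 hb2]] := rank1 r1 r2 r3.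
exists (xx pi z s b); apply: functional_extensionality => i.
exact: zx.
Qed.
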